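(* Let $n \ge 2$ and let $K, L$ be compact convex subsets of $\mathbb{R}^n$. Suppose that for every unit vector $u$, the projection $L_u$ contains a translate of $K_u$. Then there exists $x \in \mathbb{R}^n$ such that $$K + x \subseteq \tfrac{n}{n-1} L.$$
   Context: For a set $S \subseteq \mathbb{R}^n$ and a unit vector $u$, $S_u$ denotes the orthogonal projection of $S$ onto the hyperplane $u^\perp$. ''$A$ contains a translate of $B$'' means $B+w\subseteq A$ for some vector $w$. For $c>0$, $cL=\{cy : y\in L\}$. *)

(* Defs.v *)
From mathcomp Require Import all_boot.
From Stdlib Require Import Reals List.

Set Implicit Arguments.
Unset Strict Implicit.

Definition vec (n : nat) := 'I_n -> R.

Definition vadd n (x y : vec n) : vec n := fun i => (x i + y i)%R.
Definition vsub n (x y : vec n) : vec n := fun i => (x i - y i)%R.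
Definition vscale n (c : R) (x : vec n) : vec n := fun i => (c * x i)%R.

Definition dot n (x y : vec n) : R := \big[Rplus/0%R]_(i < n) (x i * y i)%R.
Definition vnorm n (x : vec n) : R := sqrt (dot x x).

Definition unit_vector n (u : vec n) : Prop := vnorm u = 1%R.

Definition veq n (x y : vec n) : Prop := forall i, x i = y i.

Definition is_open n (U : vec n -> Prop) : Prop :=
  forall x, U x -> exists eps : R, (0 < eps)%R /\
    forall y, (vnorm (vsub y x) < eps)%R -> U y.

Definition is_compact n (S : vec n -> Prop) : Prop :=
  forall (I : Type) (U : I -> vec n -> Prop),
    (forall i, is_open (U i)) ->
    (forall x, S x -> exists i, U i x) ->
    exists l : list I, forall x, S x -> exists i, In i l /\ U i x.

Definition is_convex n (S : vec n -> Prop) : Prop :=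
  forall x y (t : R), S x -> S y -> (0 <= t <= 1)%R ->
    S (vadd (vscale t x) (vscale (1 - t) y)).

(* orthogonal projection of x onto the hyperplane u^perp (u a unit vector) *)
Definition proj_perp n (u x : vec n) : vec n := vsub x (vscale (dot x u) u).

Definition proj_set n (S : vec n -> Prop) (u : vec n) : vec n -> Prop :=
  fun y => exists x, S x /\ veq y (proj_perp u x).

Definition contains_translate n (A B : vec n -> Prop) : Prop :=
  exists w : vec n, forall y, B y -> A (vadd y w).

Definition dilate n (c : R) (L : vec n -> Prop) : vec n -> Prop :=
  fun z => exists y, L y /\ veq z (vscale c y).

(* Main.v *)
Require Import Defs.
From HB Require Import structures.
From mathcomp Require Import all_boot.
From Stdlib Require Import Reals Lra Lia.
From Stdlib Require Import Classical ClassicalEpsilon FunctionalExtensionality.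

Set Implicit Arguments.
Unset Strict Implicit.

Lemma RplusA : associative Rplus. Proof. move=> *; ring. Qed.
HB.instance Definition _ := Monoid.isComLaw.Build R 0%R Rplus RplusA Rplus_comm Rplus_0_l.

Open Scope R_scope.


Lemma rsum_scal m (c : R) (F : 'I_m -> R) :
  c * \big[Rplus/0]_(i < m) F i = \big[Rplus/0]_(i < m) (c * F i).
Proof.
elim/big_rec2: _ => [|i y1 y2 _ <-]; ring.
Qed.

Lemma rsum_add m (F G : 'I_m -> R) :
  \big[Rplus/0]_(i < m) (F i + G i) = \big[Rplus/0]_(i < m) F i + \big[Rplus/0]_(i < m) G i.
Proof. by rewrite big_split. Qed.

Lemma rsum_le m (F G : 'I_m -> R) :
  (forall i, F i <= G i) -> \big[Rplus/0]_(i < m) F i <= \big[Rplus/0]_(i < m) G i.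
Proof.
move=> H; elim/big_rec2: _ => [|i y1 y2 _ Hy]; [lra|].
have := H i; lra.
Qed.

Lemma rsum0 m (F : 'I_m -> R) : (forall i, F i = 0) -> \big[Rplus/0]_(i < m) F i = 0.
Proof. by move=> H; rewrite big1. Qed.

Lemma rsum_ext m (F G : 'I_m -> R) :
  (forall i, F i = G i) -> \big[Rplus/0]_(i < m) F i = \big[Rplus/0]_(i < m) G i.
Proof. by move=> H; apply: eq_bigr => i _. Qed.

Lemma rsum_opp m (F : 'I_m -> R) : \big[Rplus/0]_(i < m) (- F i) = - \big[Rplus/0]_(i < m) F i.
Proof. elim/big_rec2: _ => [|i y1 y2 _ ->]; ring. Qed.

Lemma rsum_ge0 m (F : 'I_m -> R) : (forall i, 0 <= F i) -> 0 <= \big[Rplus/0]_(i < m) F i.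
Proof. move=> H; elim/big_rec: _ => [|i y _ Hy]; [lra|]; have := H i; lra. Qed.

Definition vsumF N m (f : 'I_m -> vec N) : vec N := fun i => \big[Rplus/0]_(k < m) f k i.
Definition vzero N : vec N := fun _ => 0.

Lemma dot_comm N (x y : vec N) : dot x y = dot y x.
Proof. rewrite /dot; apply: rsum_ext => i; ring. Qed.

Lemma dot_addl N (x y z : vec N) : dot (vadd x y) z = dot x z + dot y z.
Proof. rewrite /dot -rsum_add; apply: rsum_ext => i; rewrite /vadd; ring. Qed.

Lemma dot_subl N (x y z : vec N) : dot (vsub x y) z = dot x z - dot y z.
Proof.
rewrite /dot /Rminus -rsum_opp -rsum_add; apply: rsum_ext => i; rewrite /vsub; ring.
Qed.

Lemma dot_scalel N c (x z : vec N) : dot (vscale c x) z = c * dot x z.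
Proof. rewrite /dot rsum_scal; apply: rsum_ext => i; rewrite /vscale; ring. Qed.

Lemma dot_addr N (x y z : vec N) : dot z (vadd x y) = dot z x + dot z y.
Proof. by rewrite dot_comm dot_addl !(dot_comm z). Qed.

Lemma dot_scaler N c (x z : vec N) : dot z (vscale c x) = c * dot z x.
Proof. by rewrite dot_comm dot_scalel (dot_comm z). Qed.

Lemma dot_subr N (x y z : vec N) : dot z (vsub x y) = dot z x - dot z y.
Proof. by rewrite dot_comm dot_subl !(dot_comm z). Qed.

Lemma dot_veql N (x y z : vec N) : veq x y -> dot x z = dot y z.
Proof. by move=> H; rewrite /dot; apply: rsum_ext => i; rewrite H. Qed.

Lemma dot0l N (z : vec N) : dot (@vzero N) z = 0.
Proof. by rewrite /dot; apply: rsum0 => i; rewrite /vzero; ring. Qed.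

Lemma dot_vsumF N m (f : 'I_m -> vec N) (z : vec N) :
  dot (vsumF f) z = \big[Rplus/0]_(k < m) dot (f k) z.
Proof.
rewrite /dot /vsumF.
rewrite (eq_bigr (fun i => \big[Rplus/0]_(k < m) (f k i * z i))); last first.
  by move=> i _; rewrite Rmult_comm rsum_scal; apply: rsum_ext => k; ring.
by rewrite exchange_big.
Qed.

Lemma dot_self_ge0 N (x : vec N) : 0 <= dot x x.
Proof. apply: rsum_ge0 => i; nra. Qed.

Lemma coord_le N (x : vec N) i : x i * x i <= dot x x.
Proof.
rewrite /dot (bigD1_ord i) //=.
have := @rsum_ge0 _ (fun k => x (lift i k) * x (lift i k)) (fun k => ltac:(nra)).
move=> H; rewrite -{1}(Rplus_0_r (x i * x i)); apply: Rplus_le_compat_l; exact: H.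
Qed.

Lemma dot_self0 N (x : vec N) : dot x x = 0 -> forall i, x i = 0.
Proof. move=> H i; have := coord_le x i; have := dot_self_ge0 x; nra. Qed.

Lemma homog r : forall s (A : 'I_r -> 'I_s -> R), (r < s)%nat ->
  exists x : 'I_s -> R, (exists j, x j <> 0) /\
    forall i, \big[Rplus/0]_(j < s) (A i j * x j) = 0.
Proof.
elim: r => [|r IH] s A Hrs.
  exists (fun _ => 1); split; last by case.
  by exists (Ordinal Hrs); lra.
case: s A Hrs => [|s] A Hrs //.
have Hrs' : (r < s)%nat by [].
case: (classic (exists i0, A i0 ord0 <> 0)) => [[i0 Hp]|Hall].
  set p := A i0 ord0 in Hp.
  pose B := fun (k : 'I_r) (j : 'I_s) =>
    A (lift i0 k) (lift ord0 j) - A (lift i0 k) ord0 / p * A i0 (lift ord0 j).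
  have [y [[j Hj] Hy]] := IH s B Hrs'.
  pose T := \big[Rplus/0]_(j < s) (A i0 (lift ord0 j) * y j).
  pose x0 := - T / p.
  exists (fun j => match unlift ord0 j with Some j' => y j' | None => x0 end).
  split.
    by exists (lift ord0 j); rewrite liftK.
  move=> i; rewrite big_ord_recl unlift_none.
  rewrite (rsum_ext (G := fun j => A i (lift ord0 j) * y j)); last first.
    by move=> j'; rewrite liftK.
  case: (unliftP i0 i) => [k ->|->].
    have H := Hy k.
    rewrite (rsum_ext (G := fun j => A (lift i0 k) (lift ord0 j) * y j
        + (- (A (lift i0 k) ord0 / p)) * (A i0 (lift ord0 j) * y j))) in H; last first.
      by move=> j'; rewrite /B /Rdiv;  ring.
    rewrite rsum_add -rsum_scal -/T in H.
    set S := \big[Rplus/0]_(j < s) (A (lift i0 k) (lift ord0 j) * y j) in H *.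
    have -> : S = A (lift i0 k) ord0 / p * T by lra.
    rewrite /x0; field; done.
  rewrite -/T /x0 /p; field; done.
have H0 : forall i, A i ord0 = 0.
  by move=> i; apply: NNPP => Hi; apply: Hall; exists i.
exists (fun j => if j == ord0 then 1 else 0); split.
  by exists ord0; rewrite eqxx; lra.
move=> i; rewrite big_ord_recl eqxx H0 rsum0 //; first ring.
by move=> k; rewrite /= ; ring.
Qed.

Lemma list_min (A : Type) (f : A -> R) (P : A -> Prop) (l : list A) :
  (exists a, List.In a l /\ P a) ->
  exists z, List.In z l /\ P z /\ forall z', List.In z' l -> P z' -> f z <= f z'.
Proof.
elim: l => [|a l IH] [b [Hb Pb]]; first by case: Hb.
case: (classic (exists c, List.In c l /\ P c)) => [Hc|Hc].
  have [z [Hz [Pz Hmin]]] := IH Hc.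
  case: (Rle_lt_dec (f z) (f a)) => Hza.
    exists z; split; [by right|split=>//].
    by move=> z' [<-|Hz'] Pz'; [|apply: Hmin].
  case: (classic (P a)) => Pa.
    exists a; split; [by left|split=>//].
    move=> z' [<-|Hz'] Pz'; [lra|]. have := Hmin z' Hz' Pz'; lra.
  case: Hb => [Hab|Hb]; first by (subst; contradiction).
  exists z; split; [by right|split=>//].
  by move=> z' [<-|Hz'] Pz'; [contradiction|apply: Hmin].
case: Hb => [Hab|Hb]; last by (exfalso; apply: Hc; exists b).
subst b; exists a; split; [by left|split=>//].
move=> z' [<-|Hz'] Pz'; [lra|]. by exfalso; apply: Hc; exists z'.
Qed.

Definition contin N (f : vec N -> R) := forall x eps, 0 < eps -> exists d, 0 < d /\
  forall y, vnorm (vsub y x) < d -> Rabs (f y - f x) < eps.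

Lemma compact_min N (S : vec N -> Prop) (f : vec N -> R) :
  is_compact S -> (exists x, S x) -> contin f ->
  exists z, S z /\ forall y, S y -> f z <= f y.
Proof.
move=> HS [x0 Hx0] Hf.
apply: NNPP => Hno.
have Hcov : forall y, S y -> exists z, S z /\ f z < f y.
  move=> y Hy; apply: NNPP => Hn; apply: Hno; exists y; split=>// y' Hy'.
  apply: Rnot_lt_le => Hlt; apply: Hn; by exists y'.
have Hop : forall z, is_open (fun y => S z /\ f z < f y).
  move=> z x [Sz Hzx].
  have [d [Hd Hy]] := Hf x (f x - f z) ltac:(lra).
  exists d; split=>// y Hyx; split=>//.
  have := Hy y Hyx. move/Rabs_def2; lra.
have [l Hl] := HS (vec N) (fun z y => S z /\ f z < f y) Hop Hcov.
have [i [Hi [Si _]]] := Hl x0 Hx0.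
have [z [Hz [Sz Hmin]]] := @list_min _ f S l (ex_intro _ i (conj Hi Si)).
have [j [Hj [Sj Hjz]]] := Hl z Sz.
have := Hmin j Hj Sj; lra.
Qed.

Lemma dot_sub_self N (a b : vec N) t :
  dot (vsub a (vscale t b)) (vsub a (vscale t b)) =
  dot a a - 2 * t * dot a b + t * t * dot b b.
Proof.
rewrite !dot_subl !dot_subr !dot_scalel !dot_scaler (dot_comm b a); ring.
Qed.

Lemma cs_sq N (a b : vec N) : dot a b * dot a b <= dot a a * dot b b.
Proof.
case: (Req_dec (dot b b) 0) => Hb.
  have Hb0 := dot_self0 Hb.
  have -> : dot a b = 0.
    rewrite /dot; apply: rsum0 => i; rewrite Hb0; ring.
  rewrite Hb; lra.
have Hbp : 0 < dot b b by have := dot_self_ge0 b; lra.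
have := dot_self_ge0 (vsub a (vscale (dot a b / dot b b) b)).
rewrite dot_sub_self => H.
have H2 : 0 <= dot b b * (dot a a - 2 * (dot a b / dot b b) * dot a b +
       dot a b / dot b b * (dot a b / dot b b) * dot b b) by nra.
have E : dot b b * (dot a a - 2 * (dot a b / dot b b) * dot a b +
       dot a b / dot b b * (dot a b / dot b b) * dot b b) =
       dot a a * dot b b - dot a b * dot a b by field; lra.
lra.
Qed.

Lemma vnorm_ge0 N (a : vec N) : 0 <= vnorm a.
Proof. exact: sqrt_pos. Qed.

Lemma vnorm_sq N (a : vec N) : vnorm a * vnorm a = dot a a.
Proof. by rewrite /vnorm sqrt_sqrt //; apply: dot_self_ge0. Qed.

Lemma cs N (a b : vec N) : Rabs (dot a b) <= vnorm a * vnorm b.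
Proof.
apply: Rsqr_incr_0_var; last by apply: Rmult_le_pos; apply: vnorm_ge0.
rewrite -Rsqr_abs /Rsqr.
have -> : vnorm a * vnorm b * (vnorm a * vnorm b) = (vnorm a * vnorm a) * (vnorm b * vnorm b) by ring.
rewrite !vnorm_sq; exact: cs_sq.
Qed.

Lemma contin_lin N (v : vec N) : contin (fun y => dot y v).
Proof.
move=> x eps He; exists (eps / (vnorm v + 1)); split.
  apply: Rdiv_lt_0_compat => //; have := vnorm_ge0 v; lra.
move=> y Hy.
rewrite -dot_subl.
apply: Rle_lt_trans (cs _ _) _.
have Hv := vnorm_ge0 v.
have Hd := vnorm_ge0 (vsub y x).
have : vnorm (vsub y x) * (vnorm v + 1) < eps.
  have := Rmult_lt_compat_r (vnorm v + 1) _ _ ltac:(lra) Hy.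
  rewrite /Rdiv Rmult_assoc Rinv_l; lra.
nra.
Qed.

Lemma veq_eq N (x y : vec N) : veq x y -> x = y.
Proof. move=> H; apply: functional_extensionality => i; exact: H. Qed.

Lemma dot_opp_contin N (v : vec N) : contin (fun y => - dot y v).
Proof.
move=> x eps He; have [d [Hd H]] := contin_lin v x He.
exists d; split=>// y Hy; have := H y Hy.
rewrite -(Rabs_Ropp (- _ - _)); have -> : - (- dot y v - - dot x v) = dot y v - dot x v by ring.
by [].
Qed.

Lemma dot_add_self N (d a : vec N) :
  dot (vadd d a) (vadd d a) = dot d d + 2 * dot d a + dot a a.
Proof. rewrite dot_addl !dot_addr (dot_comm a d); ring. Qed.

Lemma contin_sqdist N (p : vec N) : contin (fun y => dot (vsub y p) (vsub y p)).
Proof.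
move=> x eps He.
set a := vsub x p.
have Ha := vnorm_ge0 a.
exists (Rmin 1 (eps / (1 + 2 * vnorm a))); split.
  apply: Rmin_glb_lt; [lra|]; apply: Rdiv_lt_0_compat; lra.
move=> y Hy.
set d := vsub y x.
have -> : vsub y p = vadd d a.
  by apply: veq_eq => i; rewrite /d /a /vadd /vsub; ring.
rewrite (dot_add_self d a).
have -> : dot d d + 2 * dot d a + dot a a - dot a a = dot d d + 2 * dot d a by ring.
have Hd := vnorm_ge0 d.
have H1 : vnorm d < 1 by apply: Rlt_le_trans Hy (Rmin_l _ _).
have H2 : vnorm d < eps / (1 + 2 * vnorm a) by apply: Rlt_le_trans Hy (Rmin_r _ _).
have H3 : vnorm d * (1 + 2 * vnorm a) < eps.
  have := Rmult_lt_compat_r (1 + 2 * vnorm a) _ _ ltac:(lra) H2.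
  rewrite /Rdiv Rmult_assoc Rinv_l; lra.
have Hc := cs d a.
have Hdd := vnorm_sq d.
apply: Rle_lt_trans (Rabs_triang _ _) _.
rewrite Rabs_right; last by rewrite -Hdd; nra.
rewrite Rabs_mult Rabs_right; last lra.
nra.
Qed.

Definition hs N (S : vec N -> Prop) (v : vec N) : R :=
  epsilon (inhabits 0) (fun r => exists y, S y /\ dot y v = r /\ forall z, S z -> dot z v <= r).

Definition cne N (S : vec N -> Prop) := is_compact S /\ exists x, S x.

Lemma hs_spec N (S : vec N -> Prop) v : cne S ->
  exists y, S y /\ dot y v = hs S v /\ forall z, S z -> dot z v <= hs S v.
Proof.
move=> [HS Hne].
have [y [Sy Hy]] := compact_min HS Hne (dot_opp_contin v).
have : exists r, exists y, S y /\ dot y v = r /\ forall z, S z -> dot z v <= r.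
  exists (dot y v), y; split=>//; split=>// z Sz; have := Hy z Sz; lra.
move/(epsilon_spec (inhabits 0)) => [y' [Sy' [E H]]].
by exists y'; split=>//.
Qed.

Lemma hs_ge N (S : vec N -> Prop) v z : cne S -> S z -> dot z v <= hs S v.
Proof. by move=> H Sz; have [y [_ [_ Hy]]] := hs_spec v H; apply: Hy. Qed.

Lemma hs_sub N (S : vec N -> Prop) a b : cne S -> hs S (vadd a b) <= hs S a + hs S b.
Proof.
move=> H; have [y [Sy [<- _]]] := hs_spec (vadd a b) H.
rewrite dot_addr; have := hs_ge a H Sy; have := hs_ge b H Sy; lra.
Qed.

Lemma hs_scale N (S : vec N -> Prop) t v : cne S -> 0 <= t -> hs S (vscale t v) = t * hs S v.
Proof.
move=> H Ht.
have [y [Sy [Ey _]]] := hs_spec v H.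
have [y' [Sy' [Ey' _]]] := hs_spec (vscale t v) H.
apply: Rle_antisym.
  rewrite -Ey' dot_scaler; apply: Rmult_le_compat_l => //; exact: hs_ge.
rewrite -Ey -dot_scaler; exact: hs_ge.
Qed.

Lemma hs_zero N (S : vec N -> Prop) : cne S -> hs S (@vzero N) = 0.
Proof.
move=> H; have -> : @vzero N = vscale 0 (@vzero N) by apply: veq_eq => i; rewrite /vscale /vzero; ring.
rewrite hs_scale //; [ring|lra].
Qed.

Lemma dot_lin1 N t (e d : vec N) : dot (vsub (vscale t e) d) (vsub (vscale t e) d) =
  t * t * dot e e - 2 * t * dot e d + dot d d.
Proof. rewrite !dot_subl !dot_subr !dot_scalel !dot_scaler (dot_comm d e); ring. Qed.

Lemma dot_lin2 N (d : vec N) : dot (vscale (-1) d) (vscale (-1) d) = dot d d.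
Proof. rewrite !dot_scalel !dot_scaler; ring. Qed.

Lemma separation N (S : vec N -> Prop) p : cne S -> is_convex S ->
  (forall v, dot p v <= hs S v) -> S p.
Proof.
move=> HS Hconv Hp.
have [q [Sq Hq]] := compact_min HS.1 HS.2 (contin_sqdist p).
set d := vsub p q.
have Hdir : forall z, S z -> dot (vsub z q) d <= 0.
  move=> z Sz; apply: Rnot_lt_le => Hg.
  set e := vsub z q in Hg; set g := dot e d in Hg.
  set E := dot e e.
  have HE0 : 0 <= E := dot_self_ge0 e.
  have HE : 0 < E.
    case: (Req_dec E 0) => HE; last first.
      by case: (Rle_lt_or_eq_dec 0 E HE0) => // H0; exfalso; apply: HE; rewrite H0.
    have He0 := dot_self0 HE.
    suff : g = 0 by lra.
    by rewrite /g /dot; apply: rsum0 => i; rewrite He0; ring.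
  set t := Rmin 1 (g / E).
  have Ht0 : 0 < t by apply: Rmin_glb_lt; [lra|apply: Rdiv_lt_0_compat].
  have Ht1 : t <= 1 by apply: Rmin_l.
  have HtE : t * E <= g.
    have : t <= g / E by apply: Rmin_r.
    move/(Rmult_le_compat_r E _ _ (Rlt_le _ _ HE)).
    by rewrite /Rdiv Rmult_assoc Rinv_l; lra.
  have Szt := Hconv z q t Sz Sq (conj (Rlt_le _ _ Ht0) Ht1).
  have := Hq _ Szt.
  have -> : vsub (vadd (vscale t z) (vscale (1 - t) q)) p = vsub (vscale t e) d.
    by apply: veq_eq => i; rewrite /vsub /vadd /vscale /e /d /vsub; ring.
  have -> : vsub q p = vscale (-1) d.
    by apply: veq_eq => i; rewrite /vsub /vscale /d /vsub; ring.
  rewrite (dot_lin1 t e d) (dot_lin2 d) -/E -/g.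
  nra.
have [z [Sz [Ez _]]] := hs_spec d HS.
have := Hdir z Sz; rewrite dot_subl Ez => H1.
have Hpd := Hp d.
have Hdd : dot d d <= 0.
  have -> : dot d d = dot p d - dot q d by rewrite -dot_subl.
  lra.
have Hd0 : dot d d = 0 by have := dot_self_ge0 d; lra.
have Hpq : p = q.
  apply: veq_eq => i; have := dot_self0 Hd0 i; rewrite /d /vsub; lra.
by rewrite Hpq.
Qed.

Lemma vsumF_recl N m (f : 'I_m.+1 -> vec N) :
  vsumF f = vadd (f ord0) (vsumF (fun k => f (lift ord0 k))).
Proof. by apply: veq_eq => i; rewrite /vsumF /vadd big_ord_recl. Qed.

Lemma vsumF_D1 N m (j : 'I_m.+1) (f : 'I_m.+1 -> vec N) :
  vsumF f = vadd (f j) (vsumF (fun k => f (lift j k))).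
Proof. by apply: veq_eq => i; rewrite /vsumF /vadd (bigD1_ord j). Qed.

Lemma vsumF0 N (f : 'I_0 -> vec N) : vsumF f = @vzero N.
Proof. by apply: veq_eq => i; rewrite /vsumF /vzero big_ord0. Qed.

Lemma rsum_D1 m (j : 'I_m.+1) (F : 'I_m.+1 -> R) :
  \big[Rplus/0]_(k < m.+1) F k = F j + \big[Rplus/0]_(k < m) F (lift j k).
Proof. by rewrite (bigD1_ord j). Qed.

Lemma hs_sumF N (S : vec N -> Prop) (HS : cne S) r (g : 'I_r -> vec N) :
  hs S (vsumF g) <= \big[Rplus/0]_(k < r) hs S (g k).
Proof.
elim: r g => [|r IH] g.
  by rewrite vsumF0 hs_zero // big_ord0; lra.
rewrite vsumF_recl big_ord_recl.
apply: Rle_trans (hs_sub _ _ HS) _.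
have := IH (fun k => g (lift ord0 k)); rewrite /=; lra.
Qed.

Lemma ord_min m (F : 'I_m.+1 -> R) : exists i, forall k, F i <= F k.
Proof.
elim: m F => [|m IH] F.
  exists ord0 => k; rewrite (_ : k = ord0); [lra|by apply: val_inj; case: k => [[]]].
have [i' Hi'] := IH (fun k => F (lift ord0 k)).
case: (Rle_lt_dec (F ord0) (F (lift ord0 i'))) => H.
  exists ord0 => k; case: (unliftP ord0 k) => [k' ->|->]; [|lra].
  have := Hi' k'; lra.
exists (lift ord0 i') => k; case: (unliftP ord0 k) => [k' ->|->]; [|lra].
exact: Hi'.
Qed.

Lemma ord_max m (F : 'I_m.+1 -> R) : exists i, forall k, F k <= F i.
Proof.
have [i Hi] := ord_min (fun k => - F k).
by exists i => k; have := Hi k; lra.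
Qed.

Lemma proj_dot N (u x v : vec N) : dot (proj_perp u x) v = dot x v - dot x u * dot u v.
Proof. by rewrite /proj_perp dot_subl dot_scalel. Qed.

Lemma rsum_opp' m (F : 'I_m -> R) : \big[Rplus/0]_(i < m) (- F i) = - \big[Rplus/0]_(i < m) F i.
Proof. elim/big_rec2: _ => [|i y1 y2 _ ->]; ring. Qed.

Section Main.
Variable N : nat.
Variables K L : vec N -> Prop.
Hypothesis HK : cne K.
Hypothesis HL : cne L.
Hypothesis Hproj : forall u, unit_vector u ->
  contains_translate (proj_set L u) (proj_set K u).
Variable c : R.
Hypothesis Hc1 : 1 <= c.

Definition phi v := c * hs L v - hs K v.

Lemma sum_phi m (f : 'I_m -> vec N) :
  \big[Rplus/0]_(k < m) phi (f k) =
  c * \big[Rplus/0]_(k < m) hs L (f k) - \big[Rplus/0]_(k < m) hs K (f k).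
Proof.
rewrite /phi /Rminus rsum_add rsum_scal rsum_opp'; done.
Qed.

Lemma phi_scale t v : 0 <= t -> phi (vscale t v) = t * phi v.
Proof. move=> Ht; rewrite /phi !hs_scale //; ring. Qed.

Lemma phi_zero : phi (@vzero N) = 0.
Proof. rewrite /phi !hs_zero //; ring. Qed.

Lemma PI u : (exists j, u j <> 0) ->
  exists w, forall v, dot u v = 0 -> hs K v + dot w v <= hs L v.
Proof.
move=> [j Hj].
have Huu : 0 < dot u u.
  have := coord_le u j; have : 0 < u j * u j by apply: (Rsqr_pos_lt (u j)).
  lra.
set nu := vnorm u.
have Hnu : nu * nu = dot u u by apply: vnorm_sq.
have Hnu0 : 0 < nu.
  have := vnorm_ge0 u; rewrite -/nu => H.
  case: (Rle_lt_or_eq_dec _ _ H) => // H0; rewrite -H0 in Hnu; lra.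
set u' := vscale (/ nu) u.
have Hu' : unit_vector u'.
  rewrite /unit_vector /vnorm /u' dot_scalel dot_scaler -Hnu.
  have -> : / nu * (/ nu * (nu * nu)) = 1 by field; lra.
  exact: sqrt_1.
have [w Hw] := Hproj Hu'.
exists w => v Hv.
have Hv' : dot u' v = 0 by rewrite /u' dot_scalel Hv; ring.
have [y [Ky [Ey _]]] := hs_spec v HK.
have Hpy : proj_set K u' (proj_perp u' y) by exists y; split.
have [z [Lz Hz]] := Hw _ Hpy.
have := dot_veql v Hz.
rewrite dot_addl !proj_dot Hv' Ey => E.
have := hs_ge v HL Lz; lra.
Qed.

Lemma base1 m (f : 'I_m.+1 -> vec N) : (m < N)%nat -> vsumF f = @vzero N ->
  0 <= \big[Rplus/0]_(k < m.+1) phi (f k).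
Proof.
move=> Hm Hf.
have [x [Hx0 Hx]] := homog (fun k j => f (lift ord0 k) j) Hm.
have [w Hw] := PI Hx0.
have Hort : forall k, dot x (f k) = 0.
  have Hl : forall k, dot x (f (lift ord0 k)) = 0.
    by move=> k; rewrite dot_comm -(Hx k) /dot.
  move=> k; case: (unliftP ord0 k) => [k' ->|->]; first exact: Hl.
  have : dot (vsumF f) x = 0 by rewrite Hf dot0l.
  rewrite vsumF_recl dot_addl dot_vsumF rsum0; last by move=> i; rewrite dot_comm Hl.
  by rewrite dot_comm; lra.
have H1 : \big[Rplus/0]_(k < m.+1) (hs K (f k) + dot w (f k)) <=
          \big[Rplus/0]_(k < m.+1) hs L (f k).
  by apply: rsum_le => k; apply: Hw; apply: Hort.
rewrite rsum_add in H1.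
have H2 : \big[Rplus/0]_(k < m.+1) dot w (f k) = 0.
  by rewrite -(rsum_ext (fun k => dot_comm (f k) w)) -dot_vsumF Hf dot0l.
have H3 : 0 <= \big[Rplus/0]_(k < m.+1) hs L (f k).
  by have := hs_sumF HL f; rewrite Hf hs_zero.
rewrite sum_phi; nra.
Qed.

Lemma rsum_const m (a : R) : \big[Rplus/0]_(i < m) a = INR m * a.
Proof.
elim: m => [|m IH]; first by rewrite big_ord0 /=; ring.
by rewrite big_ord_recl IH S_INR; ring.
Qed.

Lemma base2 q (f : 'I_q.+2 -> vec N) : (0 < q)%nat -> N = q.+1 ->
  c * INR q = INR q + 1 -> vsumF f = @vzero N ->
  0 <= \big[Rplus/0]_(k < q.+2) phi (f k).
Proof.
move=> Hq HN Hcq Hf.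
set a := f ord0.
set b := fun j : 'I_q.+1 => f (lift ord0 j).
have Hab : vadd a (vsumF b) = @vzero N by rewrite -Hf (vsumF_recl f).
set SK := \big[Rplus/0]_(j < q.+1) hs K (b j).
set AL := \big[Rplus/0]_(k < q.+2) hs L (f k).
have HAL : AL = hs L a + \big[Rplus/0]_(j < q.+1) hs L (b j) by rewrite /AL big_ord_recl.
have Ej : forall j', SK - hs K (b j') + hs K (vadd a (b j')) <= AL.
  move=> j'.
  have Hqn : (q < N)%nat by rewrite HN.
  have [x [Hx0 Hx]] := homog (fun k i => b (lift j' k) i) Hqn.
  have [w Hw] := PI Hx0.
  have Hl : forall k, dot x (b (lift j' k)) = 0.
    by move=> k; rewrite dot_comm -(Hx k) /dot.
  have Hsb : vsumF b = vadd (b j') (vsumF (fun k => b (lift j' k))) by apply: vsumF_D1.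
  have Hr : dot x (vsumF (fun k => b (lift j' k))) = 0.
    rewrite dot_comm dot_vsumF rsum0 // => k; rewrite dot_comm; exact: Hl.
  have Hab' : dot x (vadd a (b j')) = 0.
    have : dot x (vadd a (vsumF b)) = 0 by rewrite Hab dot_comm dot0l.
    rewrite Hsb !dot_addr Hr; lra.
  have Hrw : dot w (vsumF (fun k => b (lift j' k))) + dot w (vadd a (b j')) = 0.
    have : dot w (vadd a (vsumF b)) = 0 by rewrite Hab dot_comm dot0l.
    rewrite Hsb !dot_addr; lra.
  have H1 : \big[Rplus/0]_(k < q) (hs K (b (lift j' k)) + dot w (b (lift j' k))) <=
          \big[Rplus/0]_(k < q) hs L (b (lift j' k)).
    by apply: rsum_le => k; apply: Hw; apply: Hl.
  rewrite rsum_add in H1.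
  have H2 : \big[Rplus/0]_(k < q) dot w (b (lift j' k)) = dot w (vsumF (fun k => b (lift j' k))).
    by rewrite dot_comm dot_vsumF; apply: rsum_ext => k; rewrite dot_comm.
  have H3 := Hw _ Hab'.
  have H4 := hs_sub a (b j') HL.
  have H5 : SK = hs K (b j') + \big[Rplus/0]_(k < q) hs K (b (lift j' k)) by rewrite /SK (rsum_D1 j').
  have H6 : \big[Rplus/0]_(j < q.+1) hs L (b j) = hs L (b j') + \big[Rplus/0]_(k < q) hs L (b (lift j' k))
    by rewrite (rsum_D1 j').
  lra.
have Hsum := rsum_le Ej.
rewrite !rsum_add !rsum_const rsum_opp' -/SK in Hsum.
have Hsub := hs_sumF HK (fun j => vadd a (b j)).
have Hvec : vsumF (fun j => vadd a (b j)) = vscale (INR q) a.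
  apply: veq_eq => i.
  have := congr1 (fun v => v i) Hab; rewrite /vadd /vsumF /vscale /vzero => E.
  rewrite rsum_add rsum_const S_INR; lra.
rewrite Hvec hs_scale // in Hsub; last exact: pos_INR.
have HS : \big[Rplus/0]_(k < q.+2) hs K (f k) = hs K a + SK by rewrite big_ord_recl.
rewrite sum_phi -/AL HS.
have Hq0 : 0 < INR q by apply: lt_0_INR; apply/ltP.
rewrite S_INR in Hsum.
have HT : INR q * (c * AL - (hs K a + SK)) = (INR q + 1) * AL - INR q * (hs K a + SK).
  by rewrite -Hcq; ring.
have HT2 : 0 <= INR q * (c * AL - (hs K a + SK)) by rewrite HT; lra.
apply: (Rmult_le_reg_l (INR q)) => //; lra.
Qed.

Lemma drop_zero m (g : 'I_m.+1 -> vec N) i :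
  g i = @vzero N -> vsumF g = @vzero N ->
  \big[Rplus/0]_(k < m.+1) phi (g k) = \big[Rplus/0]_(k < m) phi (g (lift i k)) /\
  vsumF (fun k => g (lift i k)) = @vzero N.
Proof.
move=> Hi Hg; split.
  by rewrite (rsum_D1 i) Hi phi_zero Rplus_0_l.
apply: veq_eq => j; have := congr1 (fun v => v j) Hg.
rewrite (vsumF_D1 i) Hi /vadd /vzero; lra.
Qed.

Lemma Hfam q : (0 < q)%nat -> N = q.+1 -> c * INR q = INR q + 1 ->
  forall M m (f : 'I_m -> vec N), (m <= M)%nat -> vsumF f = @vzero N ->
  0 <= \big[Rplus/0]_(k < m) phi (f k).
Proof.
move=> Hq HN Hcq M.
elim: M => [|M IH] m f HmM Hf.
  case: m f HmM Hf => [|m] f HmM Hf //; by rewrite big_ord0; lra.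
case: m f HmM Hf => [|m] f HmM Hf; first by rewrite big_ord0; lra.
case: (ltnP m N) => HmN; first exact: base1.
case: (eqVneq m N) => HmN'.
  have Hm : m = q.+1 by move: HmN'; rewrite HN; move=> ->.
  move: f Hf; rewrite Hm => f Hf; exact: base2.
have HNm : (N < m)%nat by rewrite ltn_neqAle eq_sym HmN' HmN.
have [x [[j Hj] Hx]] := homog (fun i k => f (lift ord0 k) i) HNm.
pose lam := fun k : 'I_m.+1 => match unlift ord0 k with Some k' => x k' | None => 0 end.
have Hlam0 : lam ord0 = 0 by rewrite /lam unlift_none.
have Hlamj : lam (lift ord0 j) = x j by rewrite /lam liftK.
have Hlf : forall i, \big[Rplus/0]_(k < m.+1) (lam k * f k i) = 0.
  move=> i; rewrite big_ord_recl Hlam0 Rmult_0_l Rplus_0_l.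
  apply: eq_trans (Hx i).
  by apply: rsum_ext => k; rewrite /lam liftK Rmult_comm.
have [imin Hmin] := ord_min lam.
have [imax Hmax] := ord_max lam.
set lmin := lam imin in Hmin *; set lmax := lam imax in Hmax *.
have H1 := Hmin ord0; have H2 := Hmax ord0; have H3 := Hmin (lift ord0 j);
  have H4 := Hmax (lift ord0 j).
rewrite Hlam0 in H1 H2; rewrite Hlamj in H3 H4.
have HM : 0 < lmax - lmin.
  case: (Rle_lt_or_eq_dec lmin lmax ltac:(lra)) => H; [lra|].
  exfalso; apply: Hj; lra.
set Mx := lmax - lmin in HM.
pose bet := fun k => (lam k - lmin) / Mx.
have Hb0 : forall k, 0 <= bet k.
  move=> k; apply: Rmult_le_pos; [have := Hmin k; lra|apply: Rlt_le; apply: Rinv_0_lt_compat; lra].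
have Hb1 : forall k, 0 <= 1 - bet k.
  move=> k; rewrite /bet; have := Hmax k => Hk.
  have : (lam k - lmin) / Mx <= 1.
    have E : lam k - lmin <= Mx by rewrite /Mx; lra.
    have := Rmult_le_compat_r (/ Mx) _ _ (Rlt_le _ _ (Rinv_0_lt_compat _ HM)) E.
    by rewrite Rinv_r; [|lra].
  lra.
have Hsumf : forall i, \big[Rplus/0]_(k < m.+1) f k i = 0.
  by move=> i; have := congr1 (fun v => v i) Hf.
pose g1 := fun k => vscale (1 - bet k) (f k).
pose g2 := fun k => vscale (bet k) (f k).
have Hg2 : vsumF g2 = @vzero N.
  apply: veq_eq => i; rewrite /vsumF /g2 /vscale /vzero /bet.
  rewrite (rsum_ext (G := fun k => / Mx * (lam k * f k i) + (- lmin / Mx) * f k i)); last first.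
    by move=> k; rewrite /Rdiv; ring.
  by rewrite rsum_add -!rsum_scal Hlf Hsumf; ring.
have Hg1 : vsumF g1 = @vzero N.
  apply: veq_eq => i; have := congr1 (fun v => v i) Hg2.
  rewrite /vsumF /g1 /g2 /vscale /vzero => E.
  rewrite (rsum_ext (G := fun k => f k i + - (bet k * f k i))); last first.
    by move=> k; ring.
  by rewrite rsum_add rsum_opp' E Hsumf; ring.
have Hsplit : \big[Rplus/0]_(k < m.+1) phi (f k) =
   \big[Rplus/0]_(k < m.+1) phi (g1 k) + \big[Rplus/0]_(k < m.+1) phi (g2 k).
  rewrite -rsum_add; apply: rsum_ext => k.
  rewrite /g1 /g2 !phi_scale //; ring.
have Hg1z : g1 imax = @vzero N.
  apply: veq_eq => i; rewrite /g1 /vscale /vzero /bet -/lmax.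
  have -> : (lmax - lmin) / Mx = 1 by rewrite /Mx; field; lra.
  ring.
have Hg2z : g2 imin = @vzero N.
  apply: veq_eq => i; rewrite /g2 /vscale /vzero /bet -/lmin.
  have -> : (lmin - lmin) / Mx = 0 by rewrite /Rdiv; ring.
  ring.
have [E1 F1] := drop_zero Hg1z Hg1.
have [E2 F2] := drop_zero Hg2z Hg2.
have HmM' : (m <= M)%nat by [].
have := IH m _ HmM' F1; have := IH m _ HmM' F2.
rewrite Hsplit E1 E2; lra.
Qed.

Lemma split_l m1 m2 (i : 'I_m1) : fintype.split (lshift m2 i) = inl i.
Proof. exact: (unsplitK (inl _ i)). Qed.
Lemma split_r m1 m2 (i : 'I_m2) : fintype.split (rshift m1 i) = inr i.
Proof. exact: (unsplitK (inr _ i)). Qed.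

Definition fcat m1 m2 (f1 : 'I_m1 -> vec N) (f2 : 'I_m2 -> vec N) : 'I_(m1 + m2) -> vec N :=
  fun k => match fintype.split k with inl i => f1 i | inr j => f2 j end.

Lemma fcat_sum m1 m2 (f1 : 'I_m1 -> vec N) (f2 : 'I_m2 -> vec N) :
  vsumF (fcat f1 f2) = vadd (vsumF f1) (vsumF f2) /\
  \big[Rplus/0]_(k < m1 + m2) phi (fcat f1 f2 k) =
  \big[Rplus/0]_(k < m1) phi (f1 k) + \big[Rplus/0]_(k < m2) phi (f2 k).
Proof.
split.
  apply: veq_eq => i; rewrite /vsumF /vadd big_split_ord /=.
  by congr (_ + _); apply: rsum_ext => k; rewrite /fcat ?split_l ?split_r.
rewrite big_split_ord /=.
by congr (_ + _); apply: rsum_ext => k; rewrite /fcat ?split_l ?split_r.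
Qed.

Lemma fscale_sum m t (f : 'I_m -> vec N) : 0 <= t ->
  vsumF (fun k => vscale t (f k)) = vscale t (vsumF f) /\
  \big[Rplus/0]_(k < m) phi (vscale t (f k)) = t * \big[Rplus/0]_(k < m) phi (f k).
Proof.
move=> Ht; split.
  by apply: veq_eq => i; rewrite /vsumF /vscale rsum_scal.
by rewrite rsum_scal; apply: rsum_ext => k; rewrite phi_scale.
Qed.

Lemma fsingle (y : vec N) :
  vsumF (fun _ : 'I_1 => y) = y /\ \big[Rplus/0]_(k < 1) phi y = phi y.
Proof.
split; last by rewrite big_ord_recl big_ord0 Rplus_0_r.
by apply: veq_eq => i; rewrite /vsumF big_ord_recl big_ord0 Rplus_0_r.
Qed.

Definition Vk k (y : vec N) := forall i : 'I_N, (k <= i)%nat -> y i = 0.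

Definition Inv (a : vec N) k := (forall i : 'I_N, (k <= i)%nat -> a i = 0) /\
  forall (y : vec N) m (f : 'I_m -> vec N), Vk k y -> vsumF f = y ->
    dot a y <= \big[Rplus/0]_(k < m) phi (f k).

Lemma dot_e (kk : 'I_N) (v : vec N) :
  dot (fun i : 'I_N => if i == kk then 1 else 0) v = v kk.
Proof.
case: N kk v => [|N'] kk v; first by case: kk.
rewrite /dot (rsum_D1 kk) eqxx rsum0; first ring.
by move=> i; rewrite eq_sym (negbTE (neq_lift kk i)); ring.
Qed.

Lemma step a k (Hk : (k < N)%nat) : Inv a k -> exists a', Inv a' k.+1.
Proof.
move=> [Ha0 Ha].
pose kk := Ordinal Hk.
pose e := fun i : 'I_N => if i == kk then 1 else 0.
have Hak : a kk = 0 by apply: Ha0; rewrite /= leqnn.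
have Hub : forall z m1 (f1 : 'I_m1 -> vec N) y m2 (f2 : 'I_m2 -> vec N),
    Vk k z -> vsumF f1 = vsub z e -> Vk k y -> vsumF f2 = vadd y e ->
    dot a z - \big[Rplus/0]_(j < m1) phi (f1 j) <= \big[Rplus/0]_(j < m2) phi (f2 j) - dot a y.
  move=> z m1 f1 y m2 f2 Vz Hf1 Vy Hf2.
  have [S1 S2] := fcat_sum f1 f2.
  have Hzy : vsumF (fcat f1 f2) = vadd z y.
    rewrite S1 Hf1 Hf2; apply: veq_eq => i; rewrite /vadd /vsub; ring.
  have Vzy : Vk k (vadd z y) by move=> i Hi; rewrite /vadd Vz // Vy //; ring.
  have := Ha _ _ _ Vzy Hzy; rewrite S2 dot_addr; lra.
pose E := fun r => exists z m1 (f1 : 'I_m1 -> vec N),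
  Vk k z /\ vsumF f1 = vsub z e /\ r = dot a z - \big[Rplus/0]_(j < m1) phi (f1 j).
have [fs1 fs2] := fsingle e.
have Ve0 : Vk k (@vzero N) by [].
have He0 : vsumF (fun _ : 'I_1 => e) = vadd (@vzero N) e.
  by rewrite fs1; apply: veq_eq => i; rewrite /vadd /vzero; ring.
have HEb : bound E.
  exists (phi e - dot a (@vzero N)) => r [z [m1 [f1 [Vz [Hf1 ->]]]]].
  by have := Hub _ _ _ _ _ _ Vz Hf1 Ve0 He0; rewrite fs2.
have HEne : exists r, E r.
  have [g1 g2] := fsingle (vsub (@vzero N) e).
  by exists (dot a (@vzero N) - phi (vsub (@vzero N) e)), (@vzero N), 1%nat,
    (fun _ => vsub (@vzero N) e); rewrite g1 g2.
have [al [Hal1 Hal2]] := @completeness E HEb HEne.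
have Hlow : forall z m1 (f1 : 'I_m1 -> vec N), Vk k z -> vsumF f1 = vsub z e ->
    dot a z - \big[Rplus/0]_(j < m1) phi (f1 j) <= al.
  move=> z m1 f1 Vz Hf1; apply: Hal1; by exists z, m1, f1.
have Hup : forall y m2 (f2 : 'I_m2 -> vec N), Vk k y -> vsumF f2 = vadd y e ->
    al <= \big[Rplus/0]_(j < m2) phi (f2 j) - dot a y.
  move=> y m2 f2 Vy Hf2; apply: Hal2 => r [z [m1 [f1 [Vz [Hf1 ->]]]]].
  exact: Hub.
exists (fun i => if i == kk then al else a i); split.
  move=> i Hi; have Hne : i != kk.
    by apply/eqP => Hik; move: Hi; rewrite Hik /= ltnn.
  by rewrite (negbTE Hne); apply: Ha0; apply: ltnW.
move=> y m f Vy Hf.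
set t := y kk.
pose y0 := fun i => if i == kk then 0 else y i.
have Vy0 : Vk k y0.
  move=> i Hi; rewrite /y0; case: eqP => // Hne; apply: Vy.
  rewrite ltn_neqAle Hi andbT; apply/eqP => Hik; apply: Hne; apply: val_inj; by rewrite /= Hik.
have Hy : y = vadd y0 (vscale t e).
  by apply: veq_eq => i; rewrite /vadd /y0 /vscale /e; case: eqP => [->|_]; rewrite /t; ring.
have Ha' : (fun i => if i == kk then al else a i) = vadd a (vscale al e).
  by apply: veq_eq => i; rewrite /vadd /vscale /e; case: eqP => [->|_]; [rewrite Hak|]; ring.
have Hae : dot a e = 0 by rewrite dot_comm dot_e.
have Hey0 : dot e y0 = 0 by rewrite dot_e /y0 eqxx.
have Hee : dot e e = 1 by rewrite dot_e /e eqxx.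
rewrite Ha' {1}Hy dot_addl !dot_addr !dot_scalel !dot_scaler Hae Hey0 Hee.
set X := dot a y0; set P := \big[Rplus/0]_(j < m) phi (f j).
case: (Rtotal_order t 0) => [Ht|[Ht|Ht]].
-
  have Hs : 0 < - t by lra.
  have [F1 F2] := @fscale_sum m (/ - t) f (Rlt_le _ _ (Rinv_0_lt_compat _ Hs)).
  have Hv : vsumF (fun k => vscale (/ - t) (f k)) = vsub (vscale (/ - t) y0) e.
    rewrite F1 Hf Hy; apply: veq_eq => i; rewrite /vsub /vscale /vadd; field; lra.
  have Vs : Vk k (vscale (/ - t) y0) by move=> i Hi; rewrite /vscale Vy0 //; ring.
  have := Hlow _ _ _ Vs Hv; rewrite F2 dot_scaler -/X -/P => H.
  have := Rmult_le_compat_l (- t) _ _ (Rlt_le _ _ Hs) H.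
  have -> : - t * (/ - t * X - / - t * P) = X - P by field; lra.
  nra.
-
  rewrite Ht.
  have Hy0 : vsumF f = y0 by rewrite Hf Hy Ht; apply: veq_eq => i; rewrite /vadd /vscale; ring.
  have := Ha _ _ _ Vy0 Hy0; rewrite -/X -/P; lra.
-
  have [F1 F2] := @fscale_sum m (/ t) f (Rlt_le _ _ (Rinv_0_lt_compat _ Ht)).
  have Hv : vsumF (fun k => vscale (/ t) (f k)) = vadd (vscale (/ t) y0) e.
    rewrite F1 Hf Hy; apply: veq_eq => i; rewrite /vsub /vscale /vadd; field; lra.
  have Vs : Vk k (vscale (/ t) y0) by move=> i Hi; rewrite /vscale Vy0 //; ring.
  have := Hup _ _ _ Vs Hv; rewrite F2 dot_scaler -/X -/P => H.
  have := Rmult_le_compat_l t _ _ (Rlt_le _ _ Ht) H.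
  have -> : t * (/ t * P - / t * X) = P - X by field; lra.
  nra.
Qed.

Lemma HB_exists q : (0 < q)%nat -> N = q.+1 -> c * INR q = INR q + 1 ->
  exists a : vec N, forall v, dot a v <= phi v.
Proof.
move=> Hq HN Hcq.
have Inv0 : Inv (@vzero N) 0.
  split=>// y m f Vy Hf.
  have Hy : y = @vzero N by apply: veq_eq => i; apply: Vy.
  rewrite dot0l; apply: (Hfam Hq HN Hcq (leqnn m)); by rewrite Hf.
have Hall : forall k, (k <= N)%nat -> exists a, Inv a k.
  elim=> [|k IH] Hk; first by exists (@vzero N).
  have [a Ha] := IH (ltnW Hk).
  exact: step Hk Ha.
have [a [_ Ha]] := Hall N (leqnn N).
exists a => v.
have [s1 s2] := fsingle v.
have VN : Vk N v by move=> i Hi; exfalso; move: (ltn_ord i); rewrite ltnNge Hi.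
by have := Ha _ _ _ VN s1; rewrite s2.
Qed.

End Main.

Theorem mainTheorem8 (n : nat) (K L : vec n -> Prop) :
  (2 <= n)%nat ->
  is_compact K -> is_convex K ->
  is_compact L -> is_convex L ->
  (forall u : vec n, unit_vector u ->
     contains_translate (proj_set L u) (proj_set K u)) ->
  exists x : vec n,
    forall y, K y -> dilate (INR n / (INR n - 1))%R L (vadd y x).
Proof.
move=> Hn HKc HKv HLc HLv Hproj.
case: (classic (exists y, K y)) => [HKne|HKe]; last first.
  by exists (@vzero n) => y Ky; exfalso; apply: HKe; exists y.
case: n K L Hn HKc HKv HLc HLv Hproj HKne => [|q] // K L Hn HKc HKv HLc HLv Hproj HKne.
have Hq : (0 < q)%nat by case: q Hn {K L HKc HKv HLc HLv Hproj HKne}.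
pose e0 := fun i : 'I_q.+1 => if i == ord0 then 1 else 0.
have He0 : unit_vector e0 by rewrite /unit_vector /vnorm dot_e /e0 eqxx sqrt_1.
have HLne : exists z, L z.
  have [w Hw] := Hproj _ He0.
  have [y0 Ky0] := HKne.
  have Hp : proj_set K e0 (proj_perp e0 y0) by exists y0.
  by have [z [Lz _]] := Hw _ Hp; exists z.
have HK : cne K by [].
have HL : cne L by [].
set c := INR q.+1 / (INR q.+1 - 1).
have Hq0 : 0 < INR q by apply: lt_0_INR; apply/ltP.
have Hcq : c * INR q = INR q + 1 by rewrite /c S_INR; field; lra.
have Hc1 : 1 <= c.
  rewrite /c S_INR; have -> : INR q + 1 - 1 = INR q by ring.
  apply: (Rmult_le_reg_r (INR q)) => //; rewrite /Rdiv Rmult_assoc Rinv_l; lra.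
have Hc0 : 0 < c by lra.
have [a Ha] := @HB_exists q.+1 K L HK HL Hproj c Hc1 q Hq erefl Hcq.
exists a => y Ky.
exists (vscale (/ c) (vadd y a)); split; last first.
  by move=> i; rewrite /vscale; field; lra.
apply: separation => // v.
rewrite dot_scalel dot_addl.
have := Ha v; rewrite /phi => H.
have := hs_ge v HK Ky => H2.
apply: (Rmult_le_reg_l c) => //.
rewrite -Rmult_assoc Rinv_r; lra.
Qed.
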